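(* Let $A,B \in M_n(\mathbb{R}_+)$ be simultaneously triangularizable. Then the family $\{A, B, [A,B]_\oplus\}$ is also simultaneously triangularizable, where $[A,B]_\oplus = AB \oplus BA$.
   Context: Max algebra: $\mathbb{R}_+$ the nonnegative reals with $a\oplus b=\max\{a,b\}$ and ordinary multiplication; for $A,B\in M_n(\mathbb{R}_+)$, $(AB)_{ij}=\max_k a_{ik}b_{kj}$ and $(A\oplus B)_{ij}=\max\{a_{ij},b_{ij}\}$. $GL_n(\mathbb{R}_+)$ is the set of matrices invertible under this product (the generalized permutation matrices). A family of matrices is simultaneously triangularizable if there is one $P\in GL_n(\mathbb{R}_+)$ such that $P^{-1}XP$ is upper triangular for every member $X$ of the family. $[A,B]_\oplus=AB\oplus BA$ is the max commutator. *)

(* Defs.v *)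
From mathcomp Require Import all_boot all_order all_algebra.
From mathcomp Require Import reals.
Set Implicit Arguments. Unset Strict Implicit. Unset Printing Implicit Defensive.
Import Order.TTheory GRing.Theory Num.Theory.
Local Open Scope ring_scope.

Definition nonneg_mx (R : realType) (n : nat) (A : 'M[R]_n) : Prop :=
  forall i j, 0 <= A i j.

(* Max-algebra product: (A (x) B)_ij = max_k a_ik b_kj  (0 is the neutral
   element of max on R_+). *)
Definition maxmul (R : realType) (n : nat) (A B : 'M[R]_n) : 'M[R]_n :=
  \matrix_(i, j) \big[Num.max/0]_(k < n) (A i k * B k j).

Definition maxadd (R : realType) (n : nat) (A B : 'M[R]_n) : 'M[R]_n :=
  \matrix_(i, j) Num.max (A i j) (B i j).

Definition maxid (R : realType) (n : nat) : 'M[R]_n :=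
  \matrix_(i, j) (if i == j then 1 else 0).

Definition max_invertible (R : realType) (n : nat) (P : 'M[R]_n) : Prop :=
  nonneg_mx P /\
  exists Q : 'M[R]_n, nonneg_mx Q /\ maxmul P Q = maxid R n /\ maxmul Q P = maxid R n.

Definition upper_tri (R : realType) (n : nat) (A : 'M[R]_n) : Prop :=
  forall i j : 'I_n, (j < i)%N -> A i j = 0.

Definition simul_triang (R : realType) (n : nat) (F : 'M[R]_n -> Prop) : Prop :=
  exists P Q : 'M[R]_n,
    nonneg_mx P /\ nonneg_mx Q /\
    maxmul P Q = maxid R n /\ maxmul Q P = maxid R n /\
    forall X, F X -> upper_tri (maxmul (maxmul Q X) P).

Definition maxcomm (R : realType) (n : nat) (A B : 'M[R]_n) : 'M[R]_n :=
  maxadd (maxmul A B) (maxmul B A).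

(* Main.v *)
Require Import Defs.
From mathcomp Require Import all_boot all_order all_algebra.
From mathcomp Require Import reals.
Set Implicit Arguments. Unset Strict Implicit. Unset Printing Implicit Defensive.
Import Order.TTheory GRing.Theory Num.Theory.
Local Open Scope ring_scope.

Section MaxAlg.
Variable R : realType.
Variable n : nat.
Implicit Types X Y Z : 'M[R]_n.

Lemma big_ge0 (F : 'I_n -> R) : 0 <= \big[Num.max/0]_(k < n) F k.
Proof. by apply: bigmax_ge_id. Qed.

Lemma big_le (F : 'I_n -> R) c : 0 <= c -> (forall k, F k <= c) ->
  \big[Num.max/0]_(k < n) F k <= c.
Proof. by move=> c0 H; apply/bigmax_leP; split. Qed.

Lemma big_mulr (F : 'I_n -> R) c : 0 <= c ->
  (\big[Num.max/0]_(k < n) F k) * c = \big[Num.max/0]_(k < n) (F k * c).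
Proof.
move=> c0; apply: (big_ind2 (fun x y => x * c = y)); first by rewrite mul0r.
  by move=> x1 x2 y1 y2 <- <-; rewrite maxr_pMl.
by [].
Qed.

Lemma big_mull (F : 'I_n -> R) c : 0 <= c ->
  c * (\big[Num.max/0]_(k < n) F k) = \big[Num.max/0]_(k < n) (c * F k).
Proof.
move=> c0; apply: (big_ind2 (fun x y => c * x = y)); first by rewrite mulr0.
  by move=> x1 x2 y1 y2 <- <-; rewrite maxr_pMr.
by [].
Qed.

Lemma mm_ge0 X Y : nonneg_mx (maxmul X Y).
Proof. by move=> i j; rewrite mxE big_ge0. Qed.

Lemma id_ge0 : nonneg_mx (maxid R n).
Proof. by move=> i j; rewrite mxE; case: eqP. Qed.

Lemma madd_ge0 X Y : nonneg_mx X -> nonneg_mx (maxadd X Y).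
Proof. by move=> hX i j; rewrite mxE le_max hX. Qed.

Lemma mmA X Y Z : nonneg_mx X -> nonneg_mx Y -> nonneg_mx Z ->
  maxmul X (maxmul Y Z) = maxmul (maxmul X Y) Z.
Proof.
move=> hX hY hZ; apply/matrixP => i j; rewrite !mxE.
under eq_bigr => k _ do rewrite mxE (big_mull _ (hX i k)).
under [RHS]eq_bigr => l _ do rewrite mxE (big_mulr _ (hZ l j)).
apply: le_anti; apply/andP; split.
  apply: big_le; first exact: big_ge0.
  move=> k; apply: big_le; first exact: big_ge0.
  move=> l; apply: le_trans (le_bigmax _ _ l).
  apply: le_trans (le_bigmax _ _ k); by rewrite mulrA.
apply: big_le; first exact: big_ge0.
move=> l; apply: big_le; first exact: big_ge0.
move=> k; apply: le_trans (le_bigmax _ _ k).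
apply: le_trans (le_bigmax _ _ l); by rewrite mulrA.
Qed.

Lemma mm_id X : nonneg_mx X -> maxmul X (maxid R n) = X.
Proof.
move=> hX; apply/matrixP => i j; rewrite !mxE.
apply: le_anti; apply/andP; split.
  apply: big_le => // k; rewrite mxE; case: eqP => [->|_].
    by rewrite mulr1.
  by rewrite mulr0.
by apply: le_trans (le_bigmax _ _ j); rewrite mxE eqxx mulr1.
Qed.

Lemma id_mm X : nonneg_mx X -> maxmul (maxid R n) X = X.
Proof.
move=> hX; apply/matrixP => i j; rewrite !mxE.
apply: le_anti; apply/andP; split.
  apply: big_le => // k; rewrite mxE; case: eqP => [->|_].
    by rewrite mul1r.
  by rewrite mul0r.
by apply: le_trans (le_bigmax _ _ i); rewrite mxE eqxx mul1r.
Qed.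

Lemma mm_addr X Y Z : nonneg_mx X ->
  maxmul X (maxadd Y Z) = maxadd (maxmul X Y) (maxmul X Z).
Proof.
move=> hX; apply/matrixP => i j; rewrite !mxE.
under eq_bigr => k _ do rewrite mxE (maxr_pMr _ _ (hX i k)).
apply: le_anti; apply/andP; split.
  apply: big_le; first by rewrite le_max big_ge0.
  move=> k; rewrite ge_max; apply/andP; split.
    by rewrite le_max (le_bigmax _ (fun k => X i k * Y k j)).
  by rewrite le_max (le_bigmax _ (fun k => X i k * Z k j)) orbT.
rewrite ge_max; apply/andP; split; (apply: big_le; first exact: big_ge0);
  move=> k; apply: le_trans (le_bigmax _ _ k); by rewrite le_max lexx ?orbT.
Qed.

Lemma mm_addl X Y Z : nonneg_mx Z ->
  maxmul (maxadd X Y) Z = maxadd (maxmul X Z) (maxmul Y Z).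
Proof.
move=> hZ; apply/matrixP => i j; rewrite !mxE.
under eq_bigr => k _ do rewrite mxE (maxr_pMl _ _ (hZ k j)).
apply: le_anti; apply/andP; split.
  apply: big_le; first by rewrite le_max big_ge0.
  move=> k; rewrite ge_max; apply/andP; split.
    by rewrite le_max (le_bigmax _ (fun k => X i k * Z k j)).
  by rewrite le_max (le_bigmax _ (fun k => Y i k * Z k j)) orbT.
rewrite ge_max; apply/andP; split; (apply: big_le; first exact: big_ge0);
  move=> k; apply: le_trans (le_bigmax _ _ k); by rewrite le_max lexx ?orbT.
Qed.

Lemma ut_mm X Y : upper_tri X -> upper_tri Y -> upper_tri (maxmul X Y).
Proof.
move=> hX hY i j ji; rewrite mxE; apply: (big_ind (fun x => x = 0)) => //.
  by move=> x y -> ->; rewrite maxxx.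
move=> k _; case: (ltnP k i) => ki; first by rewrite hX // mul0r.
by rewrite hY ?mulr0 // (leq_trans ji ki).
Qed.

Lemma ut_add X Y : upper_tri X -> upper_tri Y -> upper_tri (maxadd X Y).
Proof. by move=> hX hY i j ji; rewrite mxE hX // hY // maxxx. Qed.

End MaxAlg.

Ltac nn := solve [assumption | apply: mm_ge0].

Theorem lemma3p6 (R : realType) (n : nat) (A B : 'M[R]_n) :
  nonneg_mx A -> nonneg_mx B ->
  simul_triang (fun X => X = A \/ X = B) ->
  simul_triang (fun X => X = A \/ X = B \/ X = maxcomm A B).
Proof.
move=> hA hB [P [Q [hP [hQ [PQ [QP H]]]]]].
exists P, Q; do 4 (split => //).
have key : forall X Y, nonneg_mx X -> nonneg_mx Y ->
    maxmul (maxmul Q (maxmul X Y)) P =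
    maxmul (maxmul (maxmul Q X) P) (maxmul (maxmul Q Y) P).
  move=> X Y hX hY.
  have e1 : maxmul P (maxmul (maxmul Q Y) P) = maxmul Y P.
    rewrite mmA; try nn; rewrite mmA; try nn; rewrite PQ id_mm //.
  transitivity (maxmul (maxmul Q X) (maxmul P (maxmul (maxmul Q Y) P))); last first.
    by rewrite mmA //; nn.
  rewrite e1 -(mmA hQ (mm_ge0 X Y) hP) -(mmA hX hY hP).
  by rewrite (mmA hQ hX (mm_ge0 Y P)).
have uA := H A (or_introl erefl).
have uB := H B (or_intror erefl).
move=> X [->|[->|->]] //.
rewrite /maxcomm mm_addr // mm_addl // !key //.
by apply: ut_add; apply: ut_mm.
Qed.
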